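(* Let $(V,L,\varphi,E)$ and $(V,C,\psi,E)$ be valuation systems. Assume that $\psi$ extends $\varphi$ and that $\psi$ is extendible. Then $\varphi$ is extendible and $\overline\psi$ extends $\overline\varphi$.
   Context: A valuation system $(V,L,\varphi,E)$ consists of: (i) a lattice $V$ which is $\sigma$-distributive (for every $a\in V$ and sequence $(b_n)$ with existing infimum, $\bigwedge_n(a\vee b_n)$ exists and equals $a\vee\bigwedge_n b_n$, and dually for suprema); (ii) a sublattice $L$ of $V$; (iii) a partially ordered abelian group $E$ which is R-complete (whenever $x_1\ge x_2\ge\cdots$ and $y_1\ge y_2\ge\cdots$ in $E$ are such that $\bigwedge_n(x_n+y_n)$ exists, $\bigwedge_n x_n$ and $\bigwedge_n y_n$ exist; dually for increasing sequences); (iv) a valuation $\varphi:L\to E$ (order-preserving, $\varphi(a\wedge b)+\varphi(a\vee b)=\varphi(a)+\varphi(b)$). A map $\psi:C\to E$ extends $\varphi:L\to E$ if $L\subseteq C$ and $\psi|_L=\varphi$. A decreasing (resp. increasing) sequence $(a_n)$ in $L$ is $\varphi$-convergent if $\bigwedge_n a_n$ exists in $V$ and $\bigwedge_n\varphi(a_n)$ exists in $E$ (resp. with suprema). $\Pi L:=\{\bigwedge_n a_n:(a_n)\ \varphi\text{-convergent decreasing}\}$ and $\varphi$ is $\Pi$-extendible if there is a valuation $\Pi\varphi:\Pi L\to E$ with $\Pi\varphi(\bigwedge_n a_n)=\bigwedge_n\varphi(a_n)$ for all such sequences; $\Sigma L,\Sigma$-extendible, $\Sigma\varphi$ dually. Hierarchy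 (transfinite recursion): $\Pi_0\varphi=\Sigma_0\varphi=\varphi$; $\varphi$ is $\Pi_{\alpha+1}$-extendible iff it is $\Sigma_\alpha$-extendible and $\Sigma_\alpha\varphi$ is $\Pi$-extendible, with $\Pi_{\alpha+1}\varphi=\Pi(\Sigma_\alpha\varphi)$; $\varphi$ is $\Sigma_{\alpha+1}$-extendible iff it is $\Pi_\alpha$-extendible and $\Pi_\alpha\varphi$ is $\Sigma$-extendible, with $\Sigma_{\alpha+1}\varphi=\Sigma(\Pi_\alpha\varphi)$; at a limit $\lambda$, $\varphi$ is $\Pi_\lambda$-extendible iff $\Pi_\alpha$-extendible for all $\alpha<\lambda$, and then $\Pi_\lambda\varphi$ is the common extension of the $\Pi_\alpha\varphi$ on $\bigcup_{\alpha<\lambda}\Pi_\alpha L$; similarly $\Sigma_\lambda$. The hierarchy has collapsed at $Q$, where $Q=\Pi_\alpha\varphi$ or $Q=\Sigma_\alpha\varphi$, if $\varphi$ is $\Pi_{\alpha+1}$- and $\Sigma_{\alpha+1}$-extendible and $\Pi(Q)=Q=\Sigma(Q)$. $\varphi$ is extendible if the hierarchy has collapsed at some $Q$; this $Q$ is then unique and denoted $\overline\varphi$. Same for $\psi$. *)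

(* Defs.v *)
From HB Require Import structures.
From mathcomp Require Import all_boot all_order all_algebra.
Set Implicit Arguments. Unset Strict Implicit. Unset Printing Implicit Defensive.
Import Order.TTheory GRing.Theory Num.Theory.
Notation porderZmodType := Num.POrderedZmodule.Exports.porderZmodType.

Local Open Scope order_scope.

Section Bounds.
Context {d : Order.disp_t} {T : porderType d}.
Definition is_inf (P : T -> Prop) (x : T) :=
  (forall y, P y -> x <= y) /\ (forall z, (forall y, P y -> z <= y) -> z <= x).
Definition is_sup (P : T -> Prop) (x : T) :=
  (forall y, P y -> y <= x) /\ (forall z, (forall y, P y -> y <= z) -> x <= z).
Definition inf_seq (a : nat -> T) (x : T) := is_inf (fun y => exists n, y = a n) x.
Definition sup_seq (a : nat -> T) (x : T) := is_sup (fun y => exists n, y = a n) x.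
Definition decr (a : nat -> T) := forall n, a n.+1 <= a n.
Definition incr (a : nat -> T) := forall n, a n <= a n.+1.
End Bounds.

Definition sigma_distributive {d : Order.disp_t} (V : latticeType d) :=
  (forall (a : V) (b : nat -> V) x, inf_seq b x ->
     inf_seq (fun n => Order.join a (b n)) (Order.join a x)) /\
  (forall (a : V) (b : nat -> V) x, sup_seq b x ->
     sup_seq (fun n => Order.meet a (b n)) (Order.meet a x)).

Definition po_group (E : porderZmodType) :=
  forall x y z : E, x <= y -> (x + z)%R <= (y + z)%R.

Definition R_complete (E : porderZmodType) :=
  (forall x y : nat -> E, decr x -> decr y ->
     (exists s, inf_seq (fun n => (x n + y n)%R) s) ->
     (exists s, inf_seq x s) /\ (exists s, inf_seq y s)) /\
  (forall x y : nat -> E, incr x -> incr y ->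
     (exists s, sup_seq (fun n => (x n + y n)%R) s) ->
     (exists s, sup_seq x s) /\ (exists s, sup_seq y s)).

Section Valuations.
Context {d : Order.disp_t} {V : latticeType d} {E : porderZmodType}.

Definition sublattice (L : V -> Prop) :=
  forall a b, L a -> L b -> L (Order.meet a b) /\ L (Order.join a b).

(** A valuation phi : L -> E on a sublattice L of V, represented by a total
    function V -> E whose values outside L are irrelevant. *)
Definition valuation (L : V -> Prop) (phi : V -> E) :=
  sublattice L /\
  (forall a b, L a -> L b -> a <= b -> phi a <= phi b) /\
  (forall a b, L a -> L b ->
     (phi (Order.meet a b) + phi (Order.join a b))%R = (phi a + phi b)%R).

(** A partial map C -> E, C a subset of V: (domain, values). *)
Definition pfun := ((V -> Prop) * (V -> E))%type.

Definition extends (P Q : pfun) :=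
  (forall x, P.1 x -> Q.1 x) /\ (forall x, P.1 x -> Q.2 x = P.2 x).

Definition same (P Q : pfun) := extends P Q /\ extends Q P.

Definition PiDom (P : pfun) : V -> Prop := fun x =>
  exists a : nat -> V, (forall n, P.1 (a n)) /\ decr a /\ inf_seq a x /\
    exists e, inf_seq (fun n => P.2 (a n)) e.
Definition SigDom (P : pfun) : V -> Prop := fun x =>
  exists a : nat -> V, (forall n, P.1 (a n)) /\ incr a /\ sup_seq a x /\
    exists e, sup_seq (fun n => P.2 (a n)) e.

(** [PiExt P Q] : P is Pi-extendible and Q represents Pi P. *)
Definition PiExt (P Q : pfun) :=
  (forall x, Q.1 x <-> PiDom P x) /\ valuation Q.1 Q.2 /\
  (forall (a : nat -> V) x e, (forall n, P.1 (a n)) -> decr a ->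
     inf_seq a x -> inf_seq (fun n => P.2 (a n)) e -> Q.2 x = e).
Definition SigExt (P Q : pfun) :=
  (forall x, Q.1 x <-> SigDom P x) /\ valuation Q.1 Q.2 /\
  (forall (a : nat -> V) x e, (forall n, P.1 (a n)) -> incr a ->
     sup_seq a x -> sup_seq (fun n => P.2 (a n)) e -> Q.2 x = e).
End Valuations.

(** Ordinals, as Brouwer trees with limits indexed by arbitrary types. *)
Inductive ord : Type :=
| OZ : ord
| OS : ord -> ord
| OL : forall I : Type, (I -> ord) -> ord.

Section Hierarchy.
Context {d : Order.disp_t} {V : latticeType d} {E : porderZmodType}.

(** [stages phi alpha] = (PiH, SigH) where [PiH Q] means: phi is
    Pi_alpha-extendible and Q represents Pi_alpha phi (similarly SigH). *)
Fixpoint stages (phi : @pfun d V E) (alpha : ord)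
    : (pfun -> Prop) * (pfun -> Prop) :=
  match alpha with
  | OZ => (fun Q => same Q phi, fun Q => same Q phi)
  | OS b =>
      (fun Q => exists Q0, (stages phi b).2 Q0 /\ PiExt Q0 Q,
       fun Q => exists Q0, (stages phi b).1 Q0 /\ SigExt Q0 Q)
  | OL J f =>
      (fun Q => exists Qs : J -> pfun,
          (forall i, (stages phi (f i)).1 (Qs i)) /\
          (forall x, Q.1 x <-> (phi.1 x \/ exists i, (Qs i).1 x)) /\
          extends phi Q /\ (forall i, extends (Qs i) Q),
       fun Q => exists Qs : J -> pfun,
          (forall i, (stages phi (f i)).2 (Qs i)) /\
          (forall x, Q.1 x <-> (phi.1 x \/ exists i, (Qs i).1 x)) /\
          extends phi Q /\ (forall i, extends (Qs i) Q))
  end.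

Definition PiH phi alpha := (stages phi alpha).1.
Definition SigH phi alpha := (stages phi alpha).2.

Definition collapsed (phi : @pfun d V E) (Q : pfun) :=
  exists alpha : ord,
    (PiH phi alpha Q \/ SigH phi alpha Q) /\
    (exists P, PiH phi (OS alpha) P) /\ (exists S, SigH phi (OS alpha) S) /\
    PiExt Q Q /\ SigExt Q Q.

Definition extendible (phi : @pfun d V E) := exists Q, collapsed phi Q.
End Hierarchy.

(* Main.v *)
Require Import Defs.
From mathcomp Require Import all_boot all_order all_algebra.
From Stdlib Require Import ClassicalEpsilon Classical.
Set Implicit Arguments. Unset Strict Implicit. Unset Printing Implicit Defensive.
Import Order.TTheory GRing.Theory Num.Theory.

Section OrdLemmas.
Local Open Scope order_scope.
Context {d : Order.disp_t} {T : porderType d}.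

Lemma decr_le (a : nat -> T) : decr a -> forall m n, (m <= n)%N -> a n <= a m.
Proof.
move=> da m n /subnK <-; elim: (n - m)%N => [|k IH] //=.
by rewrite addSn; apply: le_trans (da _) IH.
Qed.

Lemma incr_le (a : nat -> T) : incr a -> forall m n, (m <= n)%N -> a m <= a n.
Proof.
move=> da m n /subnK <-; elim: (n - m)%N => [|k IH] //=.
by rewrite addSn; apply: le_trans IH (da _).
Qed.

Lemma inf_const (x : T) : inf_seq (fun _ : nat => x) x.
Proof. split; first by move=> y [n ->]. by move=> z H; apply: H; exists 0%N. Qed.
Lemma sup_const (x : T) : sup_seq (fun _ : nat => x) x.
Proof. split; first by move=> y [n ->]. by move=> z H; apply: H; exists 0%N. Qed.

Lemma inf_ext (a b : nat -> T) x : (forall n, a n = b n) -> inf_seq a x -> inf_seq b x.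
Proof.
move=> e [h1 h2]; split.
  by move=> y [n ->]; rewrite -e; apply: h1; exists n.
by move=> z H; apply: h2 => y [n ->]; rewrite e; apply: H; exists n.
Qed.
Lemma sup_ext (a b : nat -> T) x : (forall n, a n = b n) -> sup_seq a x -> sup_seq b x.
Proof.
move=> e [h1 h2]; split.
  by move=> y [n ->]; rewrite -e; apply: h1; exists n.
by move=> z H; apply: h2 => y [n ->]; rewrite e; apply: H; exists n.
Qed.
End OrdLemmas.

Section GroupLemmas.
Local Open Scope order_scope.
Context {E : porderZmodType} (po : po_group E).

Lemma po_sub (x y z : E) : (x <= (y + z)%R) -> (x - z)%R <= y.
Proof. by move=> h; have := po (- z)%R h; rewrite addrK. Qed.
Lemma po_add (x y z : E) : ((x - z)%R <= y) -> x <= (y + z)%R.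
Proof. by move=> h; have := po z h; rewrite subrK. Qed.
Lemma po_sub' (x y z : E) : ((y + z)%R <= x) -> y <= (x - z)%R.
Proof. by move=> h; have := po (- z)%R h; rewrite addrK. Qed.
Lemma po_add' (x y z : E) : (y <= (x - z)%R) -> (y + z)%R <= x.
Proof. by move=> h; have := po z h; rewrite subrK. Qed.
Lemma po_add2 (x y z t : E) : x <= z -> y <= t -> (x + y)%R <= (z + t)%R.
Proof.
move=> h1 h2; apply: le_trans (po y h1) _.
by rewrite (addrC z) (addrC z); apply: po.
Qed.

Lemma inf_sum (u v : nat -> E) e1 e2 : decr u -> decr v ->
  inf_seq u e1 -> inf_seq v e2 -> inf_seq (fun n => (u n + v n)%R) (e1 + e2)%R.
Proof.
move=> du dv [u1 u2] [v1 v2]; split.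
  move=> y [n ->]; apply: po_add2; [apply: u1|apply: v1]; by exists n.
move=> z H.
have H2 : forall m n, z <= (u m + v n)%R.
  move=> m n; apply: le_trans (H _ (ex_intro _ (maxn m n) erefl)) _.
  apply: po_add2; [apply: decr_le du _ _ (leq_maxl _ _)|apply: decr_le dv _ _ (leq_maxr _ _)].
have H3 : forall n, (z - v n)%R <= e1.
  move=> n; apply: u2 => y [m ->]; apply: po_sub; exact: H2.
have H4 : (z - e1)%R <= e2.
  apply: v2 => y [n ->]; apply: po_sub; rewrite addrC; apply: po_add; exact: H3.
by rewrite addrC; apply: po_add.
Qed.

Lemma sup_sum (u v : nat -> E) e1 e2 : incr u -> incr v ->
  sup_seq u e1 -> sup_seq v e2 -> sup_seq (fun n => (u n + v n)%R) (e1 + e2)%R.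
Proof.
move=> du dv [u1 u2] [v1 v2]; split.
  move=> y [n ->]; apply: po_add2; [apply: u1|apply: v1]; by exists n.
move=> z H.
have H2 : forall m n, (u m + v n)%R <= z.
  move=> m n; apply: le_trans _ (H _ (ex_intro _ (maxn m n) erefl)).
  apply: po_add2; [apply: incr_le du _ _ (leq_maxl _ _)|apply: incr_le dv _ _ (leq_maxr _ _)].
have H3 : forall n, e1 <= (z - v n)%R.
  move=> n; apply: u2 => y [m ->]; apply: po_sub'; exact: H2.
have H4 : e2 <= (z - e1)%R.
  apply: v2 => y [n ->]; apply: po_sub'; rewrite addrC; apply: po_add'; exact: H3.
by rewrite addrC; apply: po_add'.
Qed.
End GroupLemmas.

Section LatLemmas.
Local Open Scope order_scope.
Context {d : Order.disp_t} {V : latticeType d} (sd : sigma_distributive V).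

Lemma inf_meet (a b : nat -> V) x y : inf_seq a x -> inf_seq b y ->
  inf_seq (fun n => a n `&` b n) (x `&` y).
Proof.
move=> [a1 a2] [b1 b2]; split.
  move=> _ [n ->]; apply: leI2; [apply: a1|apply: b1]; by exists n.
move=> z H; rewrite lexI; apply/andP; split.
  apply: a2 => _ [n ->]; apply: le_trans (H _ (ex_intro _ n erefl)) _; exact: leIl.
apply: b2 => _ [n ->]; apply: le_trans (H _ (ex_intro _ n erefl)) _; exact: leIr.
Qed.

Lemma sup_join (a b : nat -> V) x y : sup_seq a x -> sup_seq b y ->
  sup_seq (fun n => a n `|` b n) (x `|` y).
Proof.
move=> [a1 a2] [b1 b2]; split.
  move=> _ [n ->]; apply: leU2; [apply: a1|apply: b1]; by exists n.
move=> z H; rewrite leUx; apply/andP; split.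
  apply: a2 => _ [n ->]; apply: le_trans _ (H _ (ex_intro _ n erefl)); exact: leUl.
apply: b2 => _ [n ->]; apply: le_trans _ (H _ (ex_intro _ n erefl)); exact: leUr.
Qed.

Lemma inf_join (a b : nat -> V) x y : decr a -> decr b -> inf_seq a x -> inf_seq b y ->
  inf_seq (fun n => a n `|` b n) (x `|` y).
Proof.
move=> da db ia ib; have [a1 a2] := ia; have [b1 b2] := ib; split.
  move=> _ [n ->]; apply: leU2; [apply: a1|apply: b1]; by exists n.
move=> z H.
have H2 : forall m n, z <= a m `|` b n.
  move=> m n; apply: le_trans (H _ (ex_intro _ (maxn m n) erefl)) _.
  apply: leU2; [apply: decr_le da _ _ (leq_maxl _ _)|apply: decr_le db _ _ (leq_maxr _ _)].
have H3 : forall m, z <= y `|` a m.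
  move=> m; rewrite joinC; have [_ h] := sd.1 (a m) b y ib.
  by apply: h => _ [n ->]; apply: H2.
have [_ h] := sd.1 y a x ia; rewrite joinC; apply: h => _ [n ->]; exact: H3.
Qed.

Lemma sup_meet (a b : nat -> V) x y : incr a -> incr b -> sup_seq a x -> sup_seq b y ->
  sup_seq (fun n => a n `&` b n) (x `&` y).
Proof.
move=> da db ia ib; have [a1 a2] := ia; have [b1 b2] := ib; split.
  move=> _ [n ->]; apply: leI2; [apply: a1|apply: b1]; by exists n.
move=> z H.
have H2 : forall m n, a m `&` b n <= z.
  move=> m n; apply: le_trans _ (H _ (ex_intro _ (maxn m n) erefl)).
  apply: leI2; [apply: incr_le da _ _ (leq_maxl _ _)|apply: incr_le db _ _ (leq_maxr _ _)].
have H3 : forall m, y `&` a m <= z.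
  move=> m; rewrite meetC; have [_ h] := sd.2 (a m) b y ib.
  by apply: h => _ [n ->]; apply: H2.
have [_ h] := sd.2 y a x ia; rewrite meetC; apply: h => _ [n ->]; exact: H3.
Qed.
End LatLemmas.

Section DomLemmas.
Local Open Scope order_scope.
Context {d : Order.disp_t} {V : latticeType d} {E : porderZmodType}
  (sd : sigma_distributive V) (po : po_group E) (Rc : R_complete E).

Lemma PiDom_sub (P : V -> Prop) (f : V -> E) :
  valuation P f -> sublattice (PiDom (P, f)).
Proof.
move=> [sP [mP vP]] x y [a [/= ha [da [ia [e1 ie1]]]]] [b [/= hb [db [ib [e2 ie2]]]]].
have hI n : P (a n `&` b n) by exact: (sP _ _ (ha n) (hb n)).1.
have hU n : P (a n `|` b n) by exact: (sP _ _ (ha n) (hb n)).2.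
have dX : decr (fun n => f (a n `&` b n)).
  by move=> n; apply: mP => //; apply: leI2.
have dY : decr (fun n => f (a n `|` b n)).
  by move=> n; apply: mP => //; apply: leU2.
have dfa : decr (fun n => f (a n)) by move=> n; apply: mP.
have dfb : decr (fun n => f (b n)) by move=> n; apply: mP.
have hs := inf_sum po dfa dfb ie1 ie2.
have hs' : inf_seq (fun n => (f (a n `&` b n) + f (a n `|` b n))%R) (e1 + e2)%R.
  by apply: inf_ext hs => n /=; rewrite vP.
have [[s1 is1] [s2 is2]] := Rc.1 _ _ dX dY (ex_intro _ _ hs').
split.
  exists (fun n => a n `&` b n); split => //; split.
    by move=> n; apply: leI2.
  split; first exact: inf_meet.
  by exists s1.
exists (fun n => a n `|` b n); split => //; split.
  by move=> n; apply: leU2.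
split; first exact: inf_join.
by exists s2.
Qed.

Lemma SigDom_sub (P : V -> Prop) (f : V -> E) :
  valuation P f -> sublattice (SigDom (P, f)).
Proof.
move=> [sP [mP vP]] x y [a [/= ha [da [ia [e1 ie1]]]]] [b [/= hb [db [ib [e2 ie2]]]]].
have hI n : P (a n `&` b n) by exact: (sP _ _ (ha n) (hb n)).1.
have hU n : P (a n `|` b n) by exact: (sP _ _ (ha n) (hb n)).2.
have dX : incr (fun n => f (a n `&` b n)).
  by move=> n; apply: mP => //; apply: leI2.
have dY : incr (fun n => f (a n `|` b n)).
  by move=> n; apply: mP => //; apply: leU2.
have dfa : incr (fun n => f (a n)) by move=> n; apply: mP.
have dfb : incr (fun n => f (b n)) by move=> n; apply: mP.
have hs := sup_sum po dfa dfb ie1 ie2.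
have hs' : sup_seq (fun n => (f (a n `&` b n) + f (a n `|` b n))%R) (e1 + e2)%R.
  by apply: sup_ext hs => n /=; rewrite vP.
have [[s1 is1] [s2 is2]] := Rc.2 _ _ dX dY (ex_intro _ _ hs').
split.
  exists (fun n => a n `&` b n); split => //; split.
    by move=> n; apply: leI2.
  split; first exact: sup_meet.
  by exists s1.
exists (fun n => a n `|` b n); split => //; split.
  by move=> n; apply: leU2.
split; first exact: sup_join.
by exists s2.
Qed.
End DomLemmas.

Section Stages.
Local Open Scope order_scope.
Context {d : Order.disp_t} {V : latticeType d} {E : porderZmodType}.
Implicit Types P Q R : @pfun d V E.

Lemma ext_trans P Q R : extends P Q -> extends Q R -> extends P R.
Proof.
move=> [h1 h2] [k1 k2]; split; first by move=> x /h1 /k1.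
by move=> x hx; rewrite k2 ?h2 //; apply: h1.
Qed.

Lemma ext_refl P : extends P P.
Proof. by split. Qed.

Lemma PiExt_ext P Q : PiExt P Q -> extends P Q.
Proof.
move=> [hd [_ hv]]; split.
  move=> x Px; apply/hd; exists (fun _ => x); split; first by [].
  split; first by move=> n.
  split; first exact: inf_const.
  by exists (P.2 x); exact: inf_const.
move=> x Px; apply: (hv (fun _ => x)); [by []|by move=> n|exact: inf_const|exact: inf_const].
Qed.

Lemma SigExt_ext P Q : SigExt P Q -> extends P Q.
Proof.
move=> [hd [_ hv]]; split.
  move=> x Px; apply/hd; exists (fun _ => x); split; first by [].
  split; first by move=> n.
  split; first exact: sup_const.
  by exists (P.2 x); exact: sup_const.
move=> x Px; apply: (hv (fun _ => x)); [by []|by move=> n|exact: sup_const|exact: sup_const].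
Qed.

Lemma stage_base P al :
  (forall R, PiH P al R -> extends P R) /\ (forall R, SigH P al R -> extends P R).
Proof.
rewrite /PiH /SigH; elim: al => [|b IH|J f IH] /=.
- by split => R [_ h].
- split => R [Q0 [h e]].
    exact: ext_trans (IH.2 _ h) (PiExt_ext e).
  exact: ext_trans (IH.1 _ h) (SigExt_ext e).
- by split => R [Qs [_ [_ [e _]]]].
Qed.

Lemma pi_step Q0 R Q' : extends Q0 Q' -> PiExt Q0 R -> PiExt Q' Q' -> extends R Q'.
Proof.
move=> [x1 x2] [hd [_ hv]] [cd [_ cv]].
have key : forall x, R.1 x -> exists a e0, (forall n, Q'.1 (a n)) /\ decr a /\ inf_seq a x /\
   inf_seq (fun n => Q'.2 (a n)) e0 /\ R.2 x = e0.
  move=> x /hd [a [ha [da [ia [e0 ie0]]]]]; exists a, e0.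
  split; first by move=> n; apply: x1.
  do 2 split => //; split; last exact: hv ie0.
  by apply: inf_ext ie0 => n; rewrite x2.
split.
  move=> x /key [a [e0 [ha [da [ia [ie _]]]]]]; apply/cd.
  by exists a; do 3 split => //; exists e0.
move=> x /key [a [e0 [ha [da [ia [ie ->]]]]]]; exact: cv ie.
Qed.

Lemma sig_step Q0 R Q' : extends Q0 Q' -> SigExt Q0 R -> SigExt Q' Q' -> extends R Q'.
Proof.
move=> [x1 x2] [hd [_ hv]] [cd [_ cv]].
have key : forall x, R.1 x -> exists a e0, (forall n, Q'.1 (a n)) /\ incr a /\ sup_seq a x /\
   sup_seq (fun n => Q'.2 (a n)) e0 /\ R.2 x = e0.
  move=> x /hd [a [ha [da [ia [e0 ie0]]]]]; exists a, e0.
  split; first by move=> n; apply: x1.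
  do 2 split => //; split; last exact: hv ie0.
  by apply: sup_ext ie0 => n; rewrite x2.
split.
  move=> x /key [a [e0 [ha [da [ia [ie _]]]]]]; apply/cd.
  by exists a; do 3 split => //; exists e0.
move=> x /key [a [e0 [ha [da [ia [ie ->]]]]]]; exact: cv ie.
Qed.

Lemma stage_closed P Q' : extends P Q' -> PiExt Q' Q' -> SigExt Q' Q' -> forall al,
  (forall R, PiH P al R -> extends R Q') /\ (forall R, SigH P al R -> extends R Q').
Proof.
move=> hP cP cS al; rewrite /PiH /SigH; elim: al => [|b IH|J f IH] /=.
- by split => R [h _]; apply: ext_trans h hP.
- split => R [Q0 [h e]].
    exact: pi_step (IH.2 _ h) e cP.
  exact: sig_step (IH.1 _ h) e cS.
- have gen : forall (Qs : J -> pfun) R, (forall i, extends (Qs i) Q') ->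
      (forall x, R.1 x <-> (P.1 x \/ exists i, (Qs i).1 x)) -> extends P R ->
      (forall i, extends (Qs i) R) -> extends R Q'.
    move=> Qs R hQ hd ep ei; split.
      move=> x /hd [/(hP.1 x) //|[i hi]]; exact: (hQ i).1.
    move=> x /hd [hx|[i hi]].
      by rewrite ep.2 // hP.2.
    by rewrite (ei i).2 // (hQ i).2.
  split => R [Qs [hQs [hd [ep ei]]]]; apply: (gen Qs) => // i.
    exact: (IH i).1.
  exact: (IH i).2.
Qed.
End Stages.

Section Tower.
Variables (X : Type) (le : X -> X -> Prop).
Hypothesis le_tr : forall x y z, le x y -> le y z -> le x z.
Variables (g : X -> X) (sup : (X -> Prop) -> X) (b : X).
Hypothesis g_infl : forall x, le x (g x).
Hypothesis g_mono : forall x y, le x y -> le (g x) (g y).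
Hypothesis sup_ub : forall K k, K k -> le k (sup K).
Hypothesis sup_lub : forall K c, le b c -> (forall k, K k -> le k c) -> le (sup K) c.
Hypothesis sup_b : forall K, le b (sup K).

Definition chain (K : X -> Prop) := forall x y, K x -> K y -> le x y \/ le y x.
Definition tower (T : X -> Prop) :=
  (forall x, T x -> T (g x)) /\ (forall K, (forall k, K k -> T k) -> chain K -> T (sup K)).
Definition Mt x := forall T, tower T -> T x.

Lemma Mt_tower : tower Mt.
Proof.
split; first by move=> x hx T hT; apply: hT.1; apply: hx.
by move=> K hK cK T hT; apply: hT.2 => // k /hK; apply.
Qed.

Lemma Mt_b x : Mt x -> le b x.
Proof.
apply; split; first by move=> y hy; apply: le_tr hy (g_infl _).
by move=> K _ _; apply: sup_b.
Qed.

Definition normal c := Mt c /\ forall x, Mt x -> le x c -> ~ le c x -> le (g x) c.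

Lemma lemma1 c : normal c -> forall x, Mt x -> le x c \/ le (g c) x.
Proof.
move=> [Mc nc] x Mx.
suff : Mt x /\ (le x c \/ le (g c) x) by case.
apply: (Mx (fun y => Mt y /\ (le y c \/ le (g c) y))); split.
  move=> y [My [yc|gcy]]; (split; first exact: Mt_tower.1).
    case: (classic (le c y)) => cy; first by right; apply: g_mono.
    by left; apply: nc.
  by right; apply: le_tr gcy (g_infl _).
move=> K hK cK; split; first by apply: Mt_tower.2 => // k /hK [].
case: (classic (exists k, K k /\ le (g c) k)) => [[k [Kk gk]]|nk].
  by right; apply: le_tr gk (sup_ub Kk).
left; apply: sup_lub; first exact: Mt_b.
move=> k Kk; case: (hK k Kk) => _ [//|gk]; exfalso; apply: nk; by exists k.
Qed.

Lemma lemma2 c : Mt c -> normal c.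
Proof.
move=> Mc; apply: (Mc normal); split.
  move=> c0 nc0; have [Mc0 ncc] := nc0; split; first exact: Mt_tower.1.
  move=> x Mx xg ngx; case: (lemma1 nc0 Mx) => [xc|gx]; last by exfalso; apply: ngx.
  case: (classic (le c0 x)) => cx; first by apply: g_mono.
  exact: le_tr (ncc x Mx xc cx) (g_infl _).
move=> K hK cK; have MU : Mt (sup K) by apply: Mt_tower.2 => // k /hK [].
split => // x Mx xU nUx.
case: (classic (exists k, K k /\ ~ le (g k) x)) => [[k [Kk ngk]]|nk]; last first.
  exfalso; apply: nUx; apply: sup_lub; first exact: Mt_b.
  move=> k Kk; apply: le_tr (g_infl k) _.
  by apply: NNPP => h; apply: nk; exists k.
have nk := hK k Kk; case: (lemma1 nk Mx) => [xk|gk]; last by exfalso; apply: ngk.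
case: (classic (le k x)) => kx; last first.
  exact: le_tr (nk.2 x Mx xk kx) (sup_ub Kk).
case: (classic (exists k', K k' /\ ~ le k' k)) => [[k' [Kk' nk'k]]|nn]; last first.
  exfalso; apply: nUx; apply: le_tr _ kx; apply: sup_lub; first exact: Mt_b nk.1.
  by move=> k' Kk'; apply: NNPP => h; apply: nn; exists k'.
have kk' : le k k' by case: (cK k k' Kk Kk') => // h; exfalso; apply: nk'k.
have gkk' := (hK k' Kk').2 k nk.1 kk' nk'k.
exact: le_tr (le_tr (g_mono xk) gkk') (sup_ub Kk').
Qed.

Lemma Mt_chain : chain Mt.
Proof.
move=> x y Mx My; case: (lemma1 (lemma2 My) Mx) => [h|h]; first by left.
by right; apply: le_tr (g_infl y) h.
Qed.

Lemma tower_fix T : tower T -> exists m, T m /\ le (g m) m.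
Proof.
move=> hT; exists (sup Mt); split.
  apply: (Mt_tower.2 Mt) => //; exact: Mt_chain.
apply: sup_ub; apply: Mt_tower.1; apply: Mt_tower.2 => //; exact: Mt_chain.
Qed.
End Tower.

Section Main.
Local Open Scope order_scope.
Context {d : Order.disp_t} {V : latticeType d} {E : porderZmodType}
  (sd : sigma_distributive V) (po : po_group E) (Rc : R_complete E).
Implicit Types P Q R : @pfun d V E.

Lemma PiDom_congr P Q : (forall x, P.1 x -> Q.1 x) -> (forall x, P.1 x -> P.2 x = Q.2 x) ->
  forall x, PiDom P x -> PiDom Q x.
Proof.
move=> h1 h2 x [a [ha [da [ia [e ie]]]]]; exists a; split; first by move=> n; apply: h1.
split => //; split => //.
by exists e; apply: inf_ext ie => n; rewrite h2.
Qed.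
Lemma SigDom_congr P Q : (forall x, P.1 x -> Q.1 x) -> (forall x, P.1 x -> P.2 x = Q.2 x) ->
  forall x, SigDom P x -> SigDom Q x.
Proof.
move=> h1 h2 x [a [ha [da [ia [e ie]]]]]; exists a; split; first by move=> n; apply: h1.
split => //; split => //.
by exists e; apply: sup_ext ie => n; rewrite h2.
Qed.

Lemma PiDom_infl P x : P.1 x -> PiDom P x.
Proof.
move=> Px; exists (fun _ => x); split; first by [].
split; first by move=> n.
split; first exact: inf_const.
by exists (P.2 x); exact: inf_const.
Qed.
Lemma SigDom_infl P x : P.1 x -> SigDom P x.
Proof.
move=> Px; exists (fun _ => x); split; first by [].
split; first by move=> n.
split; first exact: sup_const.
by exists (P.2 x); exact: sup_const.
Qed.

Lemma valuation_congr (S S' : V -> Prop) (f f' : V -> E) : valuation S f ->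
  (forall x, S x <-> S' x) -> (forall x, S x -> f x = f' x) -> valuation S' f'.
Proof.
move=> [sS [mS vS]] hS hf; split.
  move=> a b /hS Sa /hS Sb; have [h1 h2] := sS a b Sa Sb; split; exact/hS.
split.
  by move=> a b /hS Sa /hS Sb ab; rewrite -!hf //; apply: mS.
move=> a b /hS Sa /hS Sb; have [h1 h2] := sS a b Sa Sb.
by rewrite -!hf //; apply: vS.
Qed.

Variable Z : @pfun d V E.
Hypothesis cP : PiExt Z Z.
Hypothesis cS : SigExt Z Z.

Lemma sub_val (S : V -> Prop) : sublattice S -> (forall x, S x -> Z.1 x) -> valuation S Z.2.
Proof.
move=> sS hS; have [_ [mZ vZ]] := cP.2.1; split => //; split.
  by move=> a b Sa Sb; apply: mZ; apply: hS.
by move=> a b Sa Sb; apply: vZ; apply: hS.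
Qed.

Lemma step_pi R (S : V -> Prop) : extends R Z -> (forall x, R.1 x <-> S x) -> sublattice S ->
  PiExt R (PiDom (S, Z.2), Z.2) /\ sublattice (PiDom (S, Z.2)).
Proof.
move=> [RZ1 RZ2] hRS sS.
have SZ : forall x, S x -> Z.1 x by move=> x /hRS /RZ1.
have sP : sublattice (PiDom (S, Z.2)) by apply: PiDom_sub => //; apply: sub_val.
have PZ : forall x, PiDom (S, Z.2) x -> Z.1 x.
  move=> x h; apply/(cP.1 x); exact: PiDom_congr h.
split => //; split.
  move=> x /=; split.
    apply: PiDom_congr => y /= hy; first exact/hRS.
    by rewrite RZ2 //; apply/hRS.
  apply: PiDom_congr => y /= hy; first exact/hRS.
  by rewrite RZ2.
split; first exact: sub_val.
move=> a x e ha da ia ie /=; apply: cP.2.2 ia _ => //; first by move=> n; apply: RZ1.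
by apply: inf_ext ie => n; rewrite RZ2.
Qed.

Lemma step_sig R (S : V -> Prop) : extends R Z -> (forall x, R.1 x <-> S x) -> sublattice S ->
  SigExt R (SigDom (S, Z.2), Z.2) /\ sublattice (SigDom (S, Z.2)).
Proof.
move=> [RZ1 RZ2] hRS sS.
have SZ : forall x, S x -> Z.1 x by move=> x /hRS /RZ1.
have sP : sublattice (SigDom (S, Z.2)) by apply: SigDom_sub => //; apply: sub_val.
have PZ : forall x, SigDom (S, Z.2) x -> Z.1 x.
  move=> x h; apply/(cS.1 x); exact: SigDom_congr h.
split => //; split.
  move=> x /=; split.
    apply: SigDom_congr => y /= hy; first exact/hRS.
    by rewrite RZ2 //; apply/hRS.
  apply: SigDom_congr => y /= hy; first exact/hRS.
  by rewrite RZ2.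
split; first exact: sub_val.
move=> a x e ha da ia ie /=; apply: cS.2.2 ia _ => //; first by move=> n; apply: RZ1.
by apply: sup_ext ie => n; rewrite RZ2.
Qed.

Lemma pi_self R (S' : V -> Prop) : extends R Z -> PiExt R (S', Z.2) ->
  (forall x, S' x -> R.1 x) -> PiExt R R.
Proof.
move=> [RZ1 RZ2] [hd [v hv]] hS'.
have dom : forall x, R.1 x <-> PiDom R x.
  move=> x; split; first exact: PiDom_infl.
  by move=> /hd /hS'.
split => //; split.
  apply: valuation_congr v _ _ => [x|x /hS' /RZ2 //]; split; first exact: hS'.
  by move=> /dom /hd.
move=> a x e ha da ia ie.
have Rx : R.1 x by apply/dom; exists a; do 2 split => //; split => //; exists e.
by rewrite -RZ2 //; apply: hv ie.
Qed.

Lemma sig_self R (S' : V -> Prop) : extends R Z -> SigExt R (S', Z.2) ->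
  (forall x, S' x -> R.1 x) -> SigExt R R.
Proof.
move=> [RZ1 RZ2] [hd [v hv]] hS'.
have dom : forall x, R.1 x <-> SigDom R x.
  move=> x; split; first exact: SigDom_infl.
  by move=> /hd /hS'.
split => //; split.
  apply: valuation_congr v _ _ => [x|x /hS' /RZ2 //]; split; first exact: hS'.
  by move=> /dom /hd.
move=> a x e ha da ia ie.
have Rx : R.1 x by apply/dom; exists a; do 2 split => //; split => //; exists e.
by rewrite -RZ2 //; apply: hv ie.
Qed.
End Main.

Section Final.
Local Open Scope order_scope.
Context {d : Order.disp_t} {V : latticeType d} {E : porderZmodType}
  (sd : sigma_distributive V) (po : po_group E) (Rc : R_complete E).
Variables (L : V -> Prop) (phi : V -> E) (vL : valuation L phi).
Variable Z : @pfun d V E.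
Hypothesis cP : PiExt Z Z.
Hypothesis cS : SigExt Z Z.
Hypothesis hLZ : extends (L, phi) Z.

Definition XX := ((V -> Prop) * (V -> Prop))%type.
Definition lep (p q : XX) := (forall x, p.1 x -> q.1 x) /\ (forall x, p.2 x -> q.2 x).
Definition PiS (S : V -> Prop) := PiDom (S, Z.2).
Definition SigS (S : V -> Prop) := SigDom (S, Z.2).
Definition gp (p : XX) : XX := (PiS (SigS p.1), SigS (PiS p.2)).
Definition supp (K : XX -> Prop) : XX :=
  (fun x => L x \/ exists p, K p /\ p.1 x, fun x => L x \/ exists p, K p /\ p.2 x).
Definition good (p : XX) := sublattice p.1 /\ sublattice p.2 /\
  exists al R R2, PiH (L, phi) al R /\ SigH (L, phi) al R2 /\
    (forall x, R.1 x <-> p.1 x) /\ (forall x, R2.1 x <-> p.2 x).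

Lemma PiS_mono S S' x : (forall y, S y -> S' y) -> PiS S x -> PiS S' x.
Proof. by move=> h; apply: PiDom_congr. Qed.
Lemma SigS_mono S S' x : (forall y, S y -> S' y) -> SigS S x -> SigS S' x.
Proof. by move=> h; apply: SigDom_congr. Qed.

Lemma lep_tr x y z : lep x y -> lep y z -> lep x z.
Proof. by move=> [h1 h2] [k1 k2]; split => t ?; [apply: k1; apply: h1|apply: k2; apply: h2]. Qed.

Lemma gp_infl x : lep x (gp x).
Proof.
split => t h; first by apply: (PiDom_infl (P := (SigS x.1, Z.2))); apply: (SigDom_infl (P := (x.1, Z.2))).
by apply: (SigDom_infl (P := (PiS x.2, Z.2))); apply: (PiDom_infl (P := (x.2, Z.2))).
Qed.

Lemma gp_mono x y : lep x y -> lep (gp x) (gp y).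
Proof.
move=> [h1 h2]; split => t /=.
  by apply: PiS_mono => u; apply: SigS_mono.
by apply: SigS_mono => u; apply: PiS_mono.
Qed.

Lemma supp_ub K k : K k -> lep k (supp K).
Proof. by move=> Kk; split => t h; right; exists k. Qed.

Lemma supp_lub K c : lep (L, L) c -> (forall k, K k -> lep k c) -> lep (supp K) c.
Proof.
move=> [b1 b2] h; split => t [Lt|[p [Kp pt]]].
- exact: b1.
- exact: (h p Kp).1.
- exact: b2.
- exact: (h p Kp).2.
Qed.

Lemma supp_b K : lep (L, L) (supp K).
Proof. by split => t h; left. Qed.

Lemma stR al R : PiH (L, phi) al R -> extends R Z.
Proof. exact: (stage_closed hLZ cP cS al).1. Qed.
Lemma stR2 al R : SigH (L, phi) al R -> extends R Z.
Proof. exact: (stage_closed hLZ cP cS al).2. Qed.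

Lemma good_g p : good p -> good (gp p).
Proof.
move=> [s1 [s2 [al [R [R2 [hR [hR2 [e1 e2]]]]]]]].
have [E1 sub1] := step_pi sd po Rc cP (stR2 hR2) e2 s2.
have [E2 sub2] := step_sig sd po Rc cP cS (stR hR) e1 s1.
have hQ1 : PiH (L, phi) (OS al) (PiS p.2, Z.2) by rewrite /PiH /=; exists R2.
have hQ2 : SigH (L, phi) (OS al) (SigS p.1, Z.2) by rewrite /SigH /=; exists R.
have [E3 sub3] := step_pi sd po Rc cP (stR2 hQ2) (fun x => iff_refl _) sub2.
have [E4 sub4] := step_sig sd po Rc cP cS (stR hQ1) (fun x => iff_refl _) sub1.
split => //; split => //.
exists (OS (OS al)), (PiS (SigS p.1), Z.2), (SigS (PiS p.2), Z.2).
split; first by rewrite /PiH /=; exists (SigS p.1, Z.2).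
split; first by rewrite /SigH /=; exists (PiS p.2, Z.2).
by split.
Qed.

Lemma good_L p : good p -> (forall x, L x -> p.1 x) /\ (forall x, L x -> p.2 x).
Proof.
move=> [_ [_ [al [R [R2 [hR [hR2 [e1 e2]]]]]]]]; split => x Lx.
  by apply/e1; apply: ((stage_base (L, phi) al).1 R hR).1.
by apply/e2; apply: ((stage_base (L, phi) al).2 R2 hR2).1.
Qed.

Lemma sub_union (K : XX -> Prop) (sel : XX -> V -> Prop) :
  (forall p, K p -> sublattice (sel p)) -> (forall p, K p -> forall x, L x -> sel p x) ->
  (forall p q, K p -> K q -> (forall x, sel p x -> sel q x) \/ (forall x, sel q x -> sel p x)) ->
  sublattice (fun x => L x \/ exists p, K p /\ sel p x).
Proof.
move=> hs hL hc; have sL := vL.1.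
have inone : forall x y, (L x \/ exists p, K p /\ sel p x) -> (L y \/ exists p, K p /\ sel p y) ->
   (L x /\ L y) \/ exists p, K p /\ sel p x /\ sel p y.
  move=> x y [Lx|[p [Kp px]]] [Ly|[q [Kq qy]]].
  - by left.
  - by right; exists q; split => //; split => //; apply: hL.
  - by right; exists p; split => //; split => //; apply: hL.
  - right; case: (hc p q Kp Kq) => h.
      by exists q; split => //; split => //; apply: h.
    by exists p; split => //; split => //; apply: h.
move=> x y hx hy; case: (inone x y hx hy) => [[Lx Ly]|[p [Kp [px py]]]].
  by have [h1 h2] := sL x y Lx Ly; split; left.
by have [h1 h2] := hs p Kp x y px py; split; right; exists p.
Qed.

Lemma good_sup K : (forall k, K k -> good k) -> chain lep K -> good (supp K).
Proof.
move=> hK cK.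
split.
  apply: sub_union => [p /hK [] //|p /hK /good_L [] //|p q Kp Kq].
  by case: (cK p q Kp Kq) => [[h _]|[h _]]; [left|right].
split.
  apply: sub_union => [p /hK [_ []] //|p /hK /good_L [] //|p q Kp Kq].
  by case: (cK p q Kp Kq) => [[_ h]|[_ h]]; [left|right].
pose I := {p : XX | K p}.
have ch : forall i : I, exists t : ord * pfun * pfun,
    PiH (L, phi) t.1.1 t.1.2 /\ SigH (L, phi) t.1.1 t.2 /\
    (forall x, t.1.2.1 x <-> (sval i).1 x) /\ (forall x, t.2.1 x <-> (sval i).2 x).
  move=> [p Kp] /=; have [_ [_ [al [R [R2 h]]]]] := hK p Kp; by exists (al, R, R2).
pose tf i := proj1_sig (constructive_indefinite_description _ (ch i)).
have tfP : forall i, _ := fun i => proj2_sig (constructive_indefinite_description _ (ch i)).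
exists (OL (fun i => (tf i).1.1)), ((supp K).1, Z.2), ((supp K).2, Z.2).
split.
  rewrite /PiH /=; exists (fun i => (tf i).1.2); split.
    by move=> i; have [h _] := tfP i.
  split.
    move=> x; split => -[Lx|[j hj]]; [by left| |by left|].
      by right; exists (exist _ j hj.1); apply/((tfP (exist _ j hj.1)).2.2.1 x); exact: hj.2.
    right; exists (sval j); split; first exact: (svalP j).
    by apply/((tfP j).2.2.1 x).
  split; first by split => x Lx /=; [left|rewrite hLZ.2].
  move=> i; split => x hx /=.
    by right; exists (sval i); split; [exact: svalP|apply/((tfP i).2.2.1 x)].
  have [h _] := tfP i; by rewrite (stR h).2.
split; last by split.
rewrite /SigH /=; exists (fun i => (tf i).2); split.
  by move=> i; have [_ [h _]] := tfP i.
split.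
  move=> x; split => -[Lx|[j hj]]; [by left| |by left|].
    by right; exists (exist _ j hj.1); apply/((tfP (exist _ j hj.1)).2.2.2 x); exact: hj.2.
  right; exists (sval j); split; first exact: (svalP j).
  by apply/((tfP j).2.2.2 x).
split; first by split => x Lx /=; [left|rewrite hLZ.2].
move=> i; split => x hx /=.
  by right; exists (sval i); split; [exact: svalP|apply/((tfP i).2.2.2 x)].
have [_ [h _]] := tfP i; by rewrite (stR2 h).2.
Qed.

Lemma final_ext : extendible (L, phi).
Proof.
have hT : tower lep gp supp good by split; [exact: good_g|exact: good_sup].
have [m [gm [l1 l2]]] := tower_fix lep_tr gp_infl gp_mono supp_ub supp_lub supp_b hT.
have [s1 [s2 [al [R [R2 [hR [hR2 [e1 e2]]]]]]]] := gm.
have [E1 _] := step_pi sd po Rc cP (stR2 hR2) e2 s2.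
have [E2 _] := step_sig sd po Rc cP cS (stR hR) e1 s1.
have [E3 _] := step_pi sd po Rc cP (stR hR) e1 s1.
have [E4 _] := step_sig sd po Rc cP cS (stR hR) e1 s1.
exists R, al; split; first by left.
split; first by exists (PiS m.2, Z.2); rewrite /PiH /=; exists R2.
split; first by exists (SigS m.1, Z.2); rewrite /SigH /=; exists R.
split.
  apply: pi_self (stR hR) E3 _ => x hx; apply/e1; apply: l1.
  by apply: PiS_mono hx => y hy; apply: (SigDom_infl (P := (m.1, Z.2))).
apply: sig_self (stR hR) E4 _ => x hx; apply/e1; apply: l1.
exact: (PiDom_infl (P := (SigS m.1, Z.2))).
Qed.
End Final.

Theorem proposition5p35 (d : Order.disp_t) (V : latticeType d)
    (E : porderZmodType)
    (L C : V -> Prop) (phi psi : V -> E) :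
  sigma_distributive V -> po_group E -> R_complete E ->
  valuation L phi -> valuation C psi ->
  extends (L, phi) (C, psi) ->
  extendible (C, psi) ->
  extendible (L, phi) /\
  (forall Q Q' : pfun, collapsed (L, phi) Q -> collapsed (C, psi) Q' ->
     extends Q Q').
Proof.
move=> sd po Rc vL vC hLC [Z [be [hZ [_ [_ [cP cS]]]]]].
have hCZ : extends (C, psi) Z.
  by case: hZ => h; [exact: (stage_base (C, psi) be).1 _ h|exact: (stage_base (C, psi) be).2 _ h].
have hLZ := ext_trans hLC hCZ.
split; first exact: (final_ext sd po Rc vL cP cS hLZ).
move=> Q Q' [al [hQ _]] [be' [hQ' [_ [_ [cP' cS']]]]].
have hCQ' : extends (C, psi) Q'.
  by case: hQ' => h; [exact: (stage_base (C, psi) be').1 _ h|exact: (stage_base (C, psi) be').2 _ h].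
have hLQ' := ext_trans hLC hCQ'.
by case: hQ => h; [exact: (stage_closed hLQ' cP' cS' al).1 _ h|exact: (stage_closed hLQ' cP' cS' al).2 _ h].
Qed.
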